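(* Let $k$ be an even positive integer. Then each connected component of $\mathcal F_k$ is a tree in which every vertex has infinitely many neighbors.
   Context: The vertex set $V$ consists of all reduced fractions $p/q$ with $p,q\in\mathbb Z$, $\gcd(p,q)=1$, together with $1/0$; here $p/q$ and $(-p)/(-q)$ denote the same vertex. For vertices define $d(p/q,a/b)=|pb-qa|$. The graph $\mathcal F_k$ has vertex set $V$, with an edge between $p/q$ and $a/b$ exactly when $d(p/q,a/b)=k$. *)

(* Defs.v *)
From Stdlib Require Import ZArith List Relations.
Import ListNotations.
Open Scope Z_scope.

(** Vertices: reduced fractions p/q (gcd p q = 1), including 1/0, with
    p/q and (-p)/(-q) identified.  We pick the canonical representative
    with q > 0, or (p,q) = (1,0). *)
Definition canon (v : Z * Z) : Prop :=
  Z.gcd (fst v) (snd v) = 1 /\ (0 < snd v \/ (snd v = 0 /\ fst v = 1)).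

Definition Vtx : Type := { v : Z * Z | canon v }.

Definition dist (x y : Vtx) : Z :=
  let (p, q) := proj1_sig x in
  let (a, b) := proj1_sig y in
  Z.abs (p * b - q * a).

Definition Fadj (k : Z) (x y : Vtx) : Prop := dist x y = k.

Section Graph.
Variable V : Type.
Variable adj : V -> V -> Prop.

Definition component (v : V) (w : V) : Prop := clos_refl_trans V adj v w.

Fixpoint chain (l : list V) : Prop :=
  match l with
  | x :: ((y :: _) as t) => adj x y /\ chain t
  | _ => True
  end.

Definition is_cycle (l : list V) : Prop :=
  (3 <= length l)%nat /\ NoDup l /\ chain l /\
  match l with
  | x :: _ => adj (last l x) x
  | [] => False
  end.

Definition connected_in (S : V -> Prop) : Prop :=
  forall x y, S x -> S y ->
    clos_refl_trans V (fun a b => S a /\ S b /\ adj a b) x y.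

Definition acyclic_in (S : V -> Prop) : Prop :=
  forall l, is_cycle l -> ~ (forall x, In x l -> S x).

Definition is_tree_in (S : V -> Prop) : Prop :=
  (exists x, S x) /\ connected_in S /\ acyclic_in S.

Definition infinite_degree (v : V) : Prop :=
  ~ exists l : list V, forall w, adj v w -> In w l.
End Graph.

(* Main.v *)
Require Import Defs.
From Stdlib Require Import ZArith List Relations Lia Permutation ProofIrrelevance.
Import ListNotations.
Open Scope Z_scope.

Lemma gcd_odd a b : Z.gcd a b = 1 -> Z.odd a = true \/ Z.odd b = true.
Proof.
  intros H.
  destruct (Z.odd a) eqn:Ha; auto. destruct (Z.odd b) eqn:Hb; auto. exfalso.
  rewrite <- Z.negb_even in Ha, Hb.
  destruct (Z.even a) eqn:Ea; try discriminate.
  destruct (Z.even b) eqn:Eb; try discriminate.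
  apply Z.even_spec in Ea. apply Z.even_spec in Eb.
  destruct Ea as [m Hm]. destruct Eb as [m' Hm'].
  assert (D : (2 | Z.gcd a b)).
  { apply Z.gcd_greatest; [exists m | exists m']; lia. }
  rewrite H in D. destruct D as [z Hz]. lia.
Qed.

Lemma gcd_nz p q : Z.gcd p q = 1 -> 0 < p*p + q*q.
Proof.
  intros H. destruct (Z.eq_dec p 0); destruct (Z.eq_dec q 0); try nia.
  subst. simpl in H. discriminate.
Qed.

Lemma coreZ p q a b c d k : 0 < k -> Z.Even k -> Z.gcd p q = 1 ->
  Z.gcd a b = 1 -> Z.gcd c d = 1 ->
  p*b - q*a = k -> p*d - q*c = k ->
  a*a+b*b <= p*p+q*q -> c*c+d*d <= p*p+q*q -> a = c /\ b = d.
Proof.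
  intros Hk Hev Hv H1 H2 E1 E2 Q1 Q2.
  assert (Hpq : p*(b-d) = q*(a-c)) by lia.
  assert (Ht : exists t, a - c = t*p /\ b - d = t*q).
  { assert (Dq : (q | b - d)).
    { apply Z.gauss with p. exists (a-c). lia. rewrite Z.gcd_comm; auto. }
    assert (Dp : (p | a - c)).
    { apply Z.gauss with q. exists (b-d). lia. auto. }
    destruct Dq as [t1 T1]. destruct Dp as [t2 T2].
    destruct (Z.eq_dec q 0).
    - exists t2. subst q. lia.
    - destruct (Z.eq_dec p 0).
      + exists t1. subst p. lia.
      + exists t1. split; [|lia].
        assert (p*q*(t1 - t2) = 0) by nia.
        assert (t1 - t2 = 0).
        { apply Z.mul_eq_0 in H. destruct H; auto. apply Z.mul_eq_0 in H. lia. }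
        nia. }
  destruct Ht as [t [T1 T2]].
  set (N := p*p+q*q).
  assert (HN : 0 < N) by (apply gcd_nz; auto).
  assert (L1 : N*(a*a+b*b) = (p*a+q*b)*(p*a+q*b) + (p*b-q*a)*(p*b-q*a)) by (unfold N; ring).
  assert (L2 : N*(c*c+d*d) = (p*c+q*d)*(p*c+q*d) + (p*d-q*c)*(p*d-q*c)) by (unfold N; ring).
  set (x := p*a+q*b) in *. set (y := p*c+q*d) in *.
  assert (M1 : N*(a*a+b*b) <= N*N) by (apply Z.mul_le_mono_nonneg_l; lia).
  assert (M2 : N*(c*c+d*d) <= N*N) by (apply Z.mul_le_mono_nonneg_l; lia).
  rewrite E1 in L1. rewrite E2 in L2.
  assert (Kp : 0 < k*k) by (apply Z.mul_pos_pos; lia).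
  assert (Xb : x*x < N*N) by lia.
  assert (Yb : y*y < N*N) by lia.
  assert (sq : forall z, z*z < N*N -> -N < z < N).
  { intros z Hz. destruct (Z_lt_le_dec z N); destruct (Z_lt_le_dec (-N) z); try lia.
    - assert (N*N <= z*z) by (replace (z*z) with ((-z)*(-z)) by ring; apply Z.mul_le_mono_nonneg; lia). lia.
    - assert (N*N <= z*z) by (apply Z.mul_le_mono_nonneg; lia). lia. }
  apply sq in Xb. apply sq in Yb.
  assert (Dxy : x - y = t*N).
  { unfold x, y, N. transitivity (p*(a-c) + q*(b-d)); [ring|]. rewrite T1, T2. ring. }
  assert (t = 0 \/ t = 1 \/ t = -1).
  { destruct (Z_le_dec 2 t). assert (2*N <= t*N) by (apply Z.mul_le_mono_nonneg_r; lia). lia.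
    destruct (Z_le_dec t (-2)). assert (t*N <= -2*N) by (apply Z.mul_le_mono_nonneg_r; lia). lia. lia. }
  destruct H as [ -> | [ -> | -> ] ]; [lia| |];
  exfalso; destruct Hev as [m Hm];
  assert (Ok : Z.odd (p*d - q*c) = false) by (rewrite E2, Hm, Z.odd_mul; reflexivity);
  rewrite Z.odd_sub, !Z.odd_mul in Ok;
  apply gcd_odd in Hv; apply gcd_odd in H2; apply gcd_odd in H1.
  - replace a with (c + p) in H1 by lia. replace b with (d + q) in H1 by lia.
    rewrite !Z.odd_add in H1.
    destruct (Z.odd p), (Z.odd q), (Z.odd c), (Z.odd d); simpl in *; intuition discriminate.
  - replace a with (c - p) in H1 by lia. replace b with (d - q) in H1 by lia.
    rewrite !Z.odd_sub in H1.
    destruct (Z.odd p), (Z.odd q), (Z.odd c), (Z.odd d); simpl in *; intuition discriminate.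
Qed.

Section G.
Variable V : Type.
Variable adj : V -> V -> Prop.

Lemma last_def (l : list V) a d1 d2 : last (a::l) d1 = last (a::l) d2.
Proof. revert a. induction l as [|b l IH]; intros; [reflexivity|]. change (last (b::l) d1 = last (b::l) d2). apply IH. Qed.

Lemma last_in (l : list V) d : l <> [] -> In (last l d) l.
Proof.
  induction l; intros H; [congruence|]. destruct l; simpl; auto.
  right. apply IHl. discriminate.
Qed.

Lemma chain_snoc (l : list V) x y : chain V adj (x::l) -> adj (last (x::l) x) y ->
  chain V adj ((x::l) ++ [y]).
Proof.
  revert x. induction l as [|z l IH]; intros x Hc Ha.
  - simpl in *. auto.
  - destruct Hc as [Hxz Hc]. change (adj x z /\ chain V adj ((z::l) ++ [y])). split; auto.
    change (adj (last (z::l) x) y) in Ha.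
    apply (IH z Hc). rewrite (last_def l z z x). exact Ha.
Qed.

Lemma rotate1 x t : is_cycle V adj (x::t) -> is_cycle V adj (t ++ [x]).
Proof.
  intros [Hl [Hn [Hc Ha]]].
  destruct t as [|y t']; [simpl in Hl; lia|].
  split; [rewrite length_app; simpl in *; lia|].
  split; [eapply Permutation_NoDup; [apply Permutation_cons_append|exact Hn]|].
  simpl in Hc. destruct Hc as [Hxy Hc].
  split.
  - apply chain_snoc; auto. simpl in Ha. rewrite (last_def t' y y x). exact Ha.
  - change (adj (last ((y :: t') ++ [x]) y) y). rewrite last_last. exact Hxy.
Qed.

Lemma rotate l1 l2 : is_cycle V adj (l1 ++ l2) -> is_cycle V adj (l2 ++ l1).
Proof.
  revert l2. induction l1 as [|a l1 IH]; intros l2 H.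
  - rewrite app_nil_r. exact H.
  - simpl in H. apply rotate1 in H. rewrite <- app_assoc in H.
    apply IH in H. rewrite <- app_assoc in H. exact H.
Qed.

Lemma max_ex (f : V -> Z) l : l <> [] -> exists m, In m l /\ forall x, In x l -> f x <= f m.
Proof.
  induction l as [|a l IH]; intros H; [congruence|].
  destruct l as [|b l].
  - exists a. split; [left; auto|]. intros x [->|[]]. lia.
  - destruct IH as [m [Hm Hmax]]; [discriminate|].
    destruct (Z_le_dec (f a) (f m)).
    + exists m. split; [right; auto|]. intros x [->|Hx]; auto.
    + exists a. split; [left; auto|]. intros x [->|Hx]; [lia|]. specialize (Hmax x Hx). lia.
Qed.

Hypothesis adj_sym : forall x y, adj x y -> adj y x.

Lemma no_cycle (f : V -> Z)
  (P : forall v w1 w2, adj v w1 -> adj v w2 -> f w1 <= f v -> f w2 <= f v -> w1 = w2) :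
  forall l, ~ is_cycle V adj l.
Proof.
  intros l Hcy.
  destruct (max_ex f l) as [m [Hm Hmax]].
  { intros ->. destruct Hcy as [Hl _]. simpl in Hl. lia. }
  destruct (in_split m l) as [l1 [l2 ->]]; auto.
  assert (Hc2 : is_cycle V adj ((m :: l2) ++ l1)) by (apply rotate; exact Hcy).
  assert (Hin : forall x, In x ((m::l2) ++ l1) -> In x (l1 ++ m :: l2)).
  { intros x Hx. apply in_app_iff in Hx. apply in_app_iff. tauto. }
  simpl in Hc2, Hin. remember (l2 ++ l1) as r eqn:Er. clear Er.
  destruct Hc2 as [Hl [Hn [Hc Ha]]].
  destruct r as [|y r']; [simpl in Hl; lia|].
  assert (Hr' : r' <> []) by (intros ->; simpl in Hl; lia).
  simpl in Hc. destruct Hc as [Hmy _].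
  change (adj (last (y::r') m) m) in Ha. rewrite (last_def r' y m y) in Ha.
  set (z := last (y::r') y) in *.
  assert (Hz : In z r').
  { unfold z. destruct r' as [|w r'']; [congruence|]. simpl. 
    change (In (last (w::r'') y) (w::r'')). apply last_in. discriminate. }
  apply NoDup_cons_iff in Hn. destruct Hn as [_ Hn]. apply NoDup_cons_iff in Hn.
  destruct Hn as [Hy _].
  assert (y = z).
  { apply (P m y z); auto; apply Hmax, Hin; simpl; auto. }
  subst z. rewrite <- H in Hz. contradiction.
Qed.

Lemma rt_sym R : (forall x y, R x y -> R y x) -> forall x y, clos_refl_trans V R x y -> clos_refl_trans V R y x.
Proof.
  intros Hs x y H. induction H.
  - apply rt_step; auto.
  - apply rt_refl.
  - eapply rt_trans; eauto.
Qed.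

Lemma comp_conn v : connected_in V adj (component V adj v).
Proof.
  set (S := component V adj v).
  set (R := fun a b => S a /\ S b /\ adj a b).
  assert (Hv : forall x, S x -> clos_refl_trans V R v x).
  { intros x Hx. unfold S, component in Hx.
    apply clos_rt_rtn1_iff in Hx. induction Hx.
    - apply rt_refl.
    - eapply rt_trans; [apply IHHx|]. apply rt_step. unfold R, S, component. split; [|split; auto].
      + apply clos_rt_rtn1_iff; auto.
      + apply clos_rt_rtn1_iff. econstructor; eauto. }
  intros x y Hx Hy. eapply rt_trans; [|apply (Hv y Hy)].
  apply rt_sym; [|apply Hv; auto]. unfold R. intros a b [? [? ?]]; auto.
Qed.

End G.

Definition Qn (x:Vtx) : Z := fst (proj1_sig x) * fst (proj1_sig x) + snd (proj1_sig x) * snd (proj1_sig x).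

Lemma sign_norm p q a b k : Z.abs (p*b - q*a) = k ->
  exists a' b', ((a' = a /\ b' = b) \/ (a' = -a /\ b' = -b)) /\ p*b' - q*a' = k.
Proof.
  intros H. destruct (Z_le_dec 0 (p*b - q*a)).
  - exists a, b. split; [left; auto|]. lia.
  - exists (-a), (-b). split; [right; auto|]. lia.
Qed.

Lemma key k : 0 < k -> Z.Even k -> forall v w1 w2 : Vtx,
  Fadj k v w1 -> Fadj k v w2 -> Qn w1 <= Qn v -> Qn w2 <= Qn v -> w1 = w2.
Proof.
  intros Hk Hev [[p q] [Hg Hc]] [[a b] [Hg1 Hc1]] [[c d] [Hg2 Hc2]] A1 A2 Q1 Q2.
  unfold Fadj, dist, Qn in *; simpl in *.
  apply subset_eq_compat.
  destruct (sign_norm _ _ _ _ _ A1) as [a' [b' [S1 E1]]].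
  destruct (sign_norm _ _ _ _ _ A2) as [c' [d' [S2 E2]]].
  assert (G1 : Z.gcd a' b' = 1) by (destruct S1 as [[-> ->]|[-> ->]]; rewrite ?Z.gcd_opp_l, ?Z.gcd_opp_r; auto).
  assert (G2 : Z.gcd c' d' = 1) by (destruct S2 as [[-> ->]|[-> ->]]; rewrite ?Z.gcd_opp_l, ?Z.gcd_opp_r; auto).
  assert (R1 : a'*a'+b'*b' <= p*p+q*q) by (destruct S1 as [[-> ->]|[-> ->]]; lia).
  assert (R2 : c'*c'+d'*d' <= p*p+q*q) by (destruct S2 as [[-> ->]|[-> ->]]; lia).
  destruct (coreZ p q a' b' c' d' k Hk Hev Hg G1 G2 E1 E2 R1 R2) as [-> ->].
  assert (a = c /\ b = d) as [-> ->] by lia. reflexivity.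
Qed.

Lemma Fadj_sym k x y : Fadj k x y -> Fadj k y x.
Proof.
  destruct x as [[p q] Hx], y as [[a b] Hy]. unfold Fadj, dist; simpl. lia.
Qed.

Lemma mkV a b : Z.gcd a b = 1 -> exists w : Vtx,
  (fst (proj1_sig w) = a /\ snd (proj1_sig w) = b) \/ (fst (proj1_sig w) = -a /\ snd (proj1_sig w) = -b).
Proof.
  intros H. destruct (Z_lt_le_dec 0 b).
  - assert (C : canon (a,b)) by (split; simpl; auto).
    exists (exist _ (a,b) C). simpl. auto.
  - destruct (Z_lt_le_dec b 0).
    + assert (C : canon (-a,-b)) by (split; simpl; [rewrite Z.gcd_opp_l, Z.gcd_opp_r; auto | lia]).
      exists (exist _ (-a,-b) C). simpl. auto.
    + assert (b = 0) by lia. subst b. rewrite Z.gcd_0_r in H.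
      assert (C : canon (1,0)) by (split; simpl; auto).
      exists (exist _ (1,0) C). simpl. lia.
Qed.

Fixpoint sumf (f : Vtx -> Z) (l : list Vtx) : Z :=
  match l with [] => 0 | x :: t => f x + sumf f t end.

Lemma sumf_ge f l : (forall x, 0 <= f x) -> 0 <= sumf f l /\ forall y, In y l -> f y <= sumf f l.
Proof.
  intros Hf. induction l as [|x t IH]; simpl.
  - split; [lia|tauto].
  - destruct IH as [I1 I2]. specialize (Hf x). split; [lia|].
    intros y [->|Hy]; [lia|]. specialize (I2 y Hy). lia.
Qed.

Lemma inf_deg k : 0 < k -> forall w, infinite_degree Vtx (Fadj k) w.
Proof.
  intros Hk w [l Hl].
  destruct w as [[p q] [Hg Hc]] eqn:Ew.
  destruct (Z.gcd_bezout p q 1 Hg) as [u [v0 Huv]].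
  set (f := fun x : Vtx => Z.abs (u * fst (proj1_sig x) + v0 * snd (proj1_sig x))).
  destruct (sumf_ge f l) as [S0 S1]; [intros; unfold f; lia|].
  set (n := sumf f l) in *.
  set (x := 1 + n*k).
  set (a := p*x - v0*k). set (b := q*x + u*k).
  assert (Eab : p*b - q*a = k).
  { unfold a, b. transitivity (k*(u*p+v0*q)); [ring|]. rewrite Huv. ring. }
  assert (Ex : u*a + v0*b = x).
  { unfold a, b. transitivity (x*(u*p+v0*q)); [ring|]. rewrite Huv. ring. }
  assert (Gab : Z.gcd a b = 1).
  { apply Z.bezout_1_gcd. exists (u + n*q), (v0 - n*p).
    transitivity ((u*a+v0*b) - n*(p*b - q*a)); [ring|]. rewrite Ex, Eab. unfold x. ring. }
  destruct (mkV a b Gab) as [w' Hw'].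
  assert (Adj : Fadj k w w').
  { subst w. destruct w' as [[a' b'] Hc']. unfold Fadj, dist. simpl in *. 
    destruct Hw' as [[-> ->]|[-> ->]].
    - rewrite Eab. lia.
    - replace (p * - b - q * - a) with (-(p*b - q*a)) by ring. rewrite Eab. lia. }
  subst w. apply Hl in Adj. apply S1 in Adj.
  unfold f in Adj. destruct w' as [[a' b'] Hc']. cbn [fst snd proj1_sig] in Adj, Hw'.
  assert (n*1 <= n*k) by (apply Z.mul_le_mono_nonneg_l; lia).
  destruct Hw' as [[-> ->]|[-> ->]].
  - rewrite Ex in Adj. unfold x in Adj. clearbody n. lia.
  - replace (u * - a + v0 * - b) with (-(u*a + v0*b)) in Adj by ring. rewrite Ex in Adj. unfold x in Adj. clearbody n. lia.
Qed.

Theorem proposition4p13 (k : Z) (hk : 0 < k) (heven : Z.Even k) :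
  forall v : Vtx,
    is_tree_in Vtx (Fadj k) (component Vtx (Fadj k) v) /\
    (forall w : Vtx, component Vtx (Fadj k) v w -> infinite_degree Vtx (Fadj k) w).
Proof.
  intros v. split.
  - split; [exists v; apply rt_refl|]. split.
    + apply comp_conn. apply Fadj_sym.
    + intros l Hl _. eapply (no_cycle Vtx (Fadj k) (Fadj_sym k) Qn); [|exact Hl].
      intros. eapply key; eauto.
  - intros w _. apply inf_deg; auto.
Qed.
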